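(* Let $G$ be a graph with a linear order $<$ on $V(G)$ satisfying the X-property, let $s<t$ be vertices with $d^*:=\operatorname{dist}(s,t)<\infty$, and let $P=p_0,p_1,\dots,p_{d^*}$ (with $p_0=s$, $p_{d^*}=t$) be a shortest $s$-$t$ path with $\operatorname{lefti}(P)<\operatorname{righti}(P)$. Then $p_i<p_j$ for all indices $i<\operatorname{lefti}(P)<j$, and $p_i<p_j$ for all indices $i<\operatorname{righti}(P)<j$.
   Context: The X-property: for all vertices $p<q<r<s$, if $\{p,r\}\in E(G)$ and $\{q,s\}\in E(G)$ then $\{p,s\}\in E(G)$. $\operatorname{dist}$ is the number of edges of a shortest path. $\operatorname{lefti}(P)$ is the index $i$ such that $p_i$ is the leftmost (w.r.t. $<$) vertex of $P$, and $\operatorname{righti}(P)$ the index of the rightmost vertex of $P$. *)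

(* Defs.v *)
From mathcomp Require Import all_boot all_order.
Set Implicit Arguments. Unset Strict Implicit. Unset Printing Implicit Defensive.
Import Order.TTheory.
Local Open Scope order_scope.

Definition simple_graph (T : eqType) (e : rel T) : Prop :=
  symmetric e /\ irreflexive e.

Definition X_property (d : Order.disp_t) (T : orderType d) (e : rel T) : Prop :=
  forall p q r s : T, p < q -> q < r -> r < s -> e p r -> e q s -> e p s.

(* The walk  s :: q  (vertices p_0 = s, p_1, ..., p_k, with k = size q edges)
   goes from s to t. *)
Definition walk_st (T : eqType) (e : rel T) (s t : T) (q : seq T) : Prop :=
  path e s q /\ last s q = t.

(* s :: q is a shortest s-t path: it is an s-t walk and every s-t walk has
   at least as many edges. Its number of edges size q is dist(s,t). *)
Definition shortest_st (T : eqType) (e : rel T) (s t : T) (q : seq T) : Prop :=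
  walk_st e s t q /\ forall q', walk_st e s t q' -> size q <= size q'.

Definition is_lefti (d : Order.disp_t) (T : orderType d) (x0 : T) (P : seq T) (l : nat) : Prop :=
  (l < size P)%N /\ forall k, (k < size P)%N -> nth x0 P l <= nth x0 P k.

Definition is_righti (d : Order.disp_t) (T : orderType d) (x0 : T) (P : seq T) (r : nat) : Prop :=
  (r < size P)%N /\ forall k, (k < size P)%N -> nth x0 P k <= nth x0 P r.

(* Main.v *)
Require Import Defs.
From mathcomp Require Import all_boot all_order.
From mathcomp Require Import zify.
Import Order.TTheory.
Set Implicit Arguments. Unset Strict Implicit. Unset Printing Implicit Defensive.
Local Open Scope order_scope.

Definition inside (d : Order.disp_t) (T : orderType d) (u v z : T) :=
  ((u < z) && (z < v)) || ((v < z) && (z < u)).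
Definition bt (d : Order.disp_t) (T : orderType d) (u v z : T) :=
  (u < z) != (v < z).

Lemma bt_inside (d : Order.disp_t) (T : orderType d) (u v z : T) :
  z != u -> z != v -> bt u v z = inside u v z.
Proof.
rewrite /bt /inside => zu zv.
case: (ltgtP u z) => [h1|h1|h1]; case: (ltgtP v z) => [h2|h2|h2] //=;
  try (by rewrite (lt_gtF h1)); try (by rewrite (lt_gtF h2));
  try (by rewrite h2 eqxx in zv); by rewrite h1 eqxx in zu.
Qed.

Lemma bt_trans (d : Order.disp_t) (T : orderType d) (u v w z : T) :
  bt u w z = (bt u v z != bt v w z).
Proof. by rewrite /bt; case: (u < z); case: (v < z); case: (w < z). Qed.

Lemma inside_gt (d : Order.disp_t) (T : orderType d) (u v z : T) :
  v < u -> inside u v z -> (v < z) && (z < u).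
Proof.
move=> vu; case/orP => // /andP[h1 h2].
by have := lt_trans h1 h2; rewrite (lt_gtF vu).
Qed.

Lemma crossX (d : Order.disp_t) (T : orderType d) (e : rel T) :
  symmetric e -> X_property e -> forall u v w x, e u v -> e w x ->
  inside u v w -> ~~ inside u v x -> x != u -> x != v -> e x u || e x v.
Proof.
move=> Hs HX u v w x euv ewx; rewrite /inside.
case/orP => /andP[uw wv] Hn xu xv.
- case: (ltgtP x u) => [xu'|ux|exu].
  + by rewrite (HX _ _ _ _ xu' uw wv ltac:(by rewrite Hs) euv) orbT.
  + case: (ltgtP x v) => [xv'|vx|exv].
    * by move: Hn; rewrite ux xv'.
    * by rewrite Hs (HX _ _ _ _ uw wv vx euv ewx).
    * by rewrite exv eqxx in xv.
  + by rewrite exu eqxx in xu.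
- have evu : e v u by rewrite Hs.
  case: (ltgtP x v) => [xv'|vx|exv].
  + by rewrite (HX _ _ _ _ xv' uw wv ltac:(by rewrite Hs) evu).
  + case: (ltgtP x u) => [xu'|ux|exu].
    * by move: Hn; rewrite vx xu' orbT.
    * by rewrite [e x v]Hs (HX _ _ _ _ uw wv ux evu ewx) orbT.
    * by rewrite exu eqxx in xu.
  + by rewrite exv eqxx in xv.
Qed.

Lemma exstep (P : pred nat) a b : (a <= b)%N -> P a -> ~~ P b ->
  exists2 c, (a <= c < b)%N & P c && ~~ P c.+1.
Proof.
elim: b => [|b IH] ab Pa Pb.
  by move: ab; rewrite leqn0 => /eqP E; subst a; rewrite Pa in Pb.
case: (ltnP a b.+1) => ab'; last first.
  have E : a = b.+1 by lia. by subst a; rewrite Pa in Pb.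
case: (boolP (P b)) => Pb'.
  by exists b; [lia|rewrite Pb' Pb].
have [c c1 c2] := IH (ltac:(lia)) Pa Pb'. by exists c; [lia|].
Qed.

Lemma exmax (d : Order.disp_t) (T : orderType d) (f : nat -> T) a b : (a <= b)%N ->
  exists2 i, (a <= i <= b)%N & forall k, (a <= k <= b)%N -> f k <= f i.
Proof.
elim: b => [|b IH] ab.
  exists a; first lia. move=> k hk. have -> : k = a by lia. by [].
case: (ltnP a b.+1) => ab'; last first.
  exists b.+1; first lia. move=> k hk. have -> : k = b.+1 by lia. by [].
have [i i1 i2] := IH (ltac:(lia)).
case: (leP (f i) (f b.+1)) => h.
- exists b.+1; first lia. move=> k hk.
  case: (ltnP k b.+1) => kb; first by apply: le_trans h; apply: i2; lia.
  have -> : k = b.+1 by lia. by [].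
- exists i; first lia. move=> k hk.
  case: (ltnP k b.+1) => kb; first by apply: i2; lia.
  have -> : k = b.+1 by lia. exact: ltW.
Qed.

Lemma exmin (d : Order.disp_t) (T : orderType d) (f : nat -> T) a b : (a <= b)%N ->
  exists2 i, (a <= i <= b)%N & forall k, (a <= k <= b)%N -> f i <= f k.
Proof.
elim: b => [|b IH] ab.
  exists a; first lia. move=> k hk. have -> : k = a by lia. by [].
case: (ltnP a b.+1) => ab'; last first.
  exists b.+1; first lia. move=> k hk. have -> : k = b.+1 by lia. by [].
have [i i1 i2] := IH (ltac:(lia)).
case: (leP (f b.+1) (f i)) => h.
- exists b.+1; first lia. move=> k hk.
  case: (ltnP k b.+1) => kb; first by apply: le_trans h _; apply: i2; lia.
  have -> : k = b.+1 by lia. by [].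
- exists i; first lia. move=> k hk.
  case: (ltnP k b.+1) => kb; first by apply: i2; lia.
  have -> : k = b.+1 by lia. exact: ltW.
Qed.

Definition good (d : Order.disp_t) (T : orderType d) (e : rel T) (p : nat -> T) (n : nat) :=
  [/\ symmetric e, X_property e, (forall k, (k < n)%N -> e (p k) (p k.+1)),
      (forall i j, (i < j <= n)%N -> p i != p j) &
      (forall i j, (i.+1 < j <= n)%N -> ~~ e (p i) (p j))].


Lemma good_ne (d : Order.disp_t) (T : orderType d) e (p : nat -> T) n :
  good e p n -> forall i j, (i <= n)%N -> (j <= n)%N -> i != j -> p i != p j.
Proof.
case=> _ _ _ Hd _ i j hi hj; case: (ltngtP i j) => // h _.
- by apply: Hd; lia.
- by rewrite eq_sym; apply: Hd; lia.
Qed.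

Lemma good_na (d : Order.disp_t) (T : orderType d) e (p : nat -> T) n :
  good e p n -> forall i j, (j <= n)%N -> (i <= n)%N -> (i.+1 < j \/ j.+1 < i)%N ->
  ~~ e (p i) (p j).
Proof.
case=> Hs _ _ _ Ha i j hj hi [h|h]; first by apply: Ha; lia.
by rewrite Hs; apply: Ha; lia.
Qed.

Lemma Fstep (d : Order.disp_t) (T : orderType d) e (p : nat -> T) n :
  good e p n -> forall k m, (k.+2 <= m)%N -> (m < n)%N ->
  inside (p k) (p k.+1) (p m) -> inside (p k) (p k.+1) (p m.+1).
Proof.
move=> G k m km mn Hin; have [Hs HX He Hd Ha] := G.
apply/negPn/negP => Hout.
have e1 : e (p k) (p k.+1) by apply: He; lia.
have e2 : e (p m) (p m.+1) by apply: He; lia.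
have n1 : p m.+1 != p k by apply: (good_ne G); lia.
have n2 : p m.+1 != p k.+1 by apply: (good_ne G); lia.
have a1 : ~~ e (p m.+1) (p k) by apply: (good_na G); lia.
have a2 : ~~ e (p m.+1) (p k.+1) by apply: (good_na G); lia.
have := crossX Hs HX e1 e2 Hin Hout n1 n2.
by rewrite (negbTE a1) (negbTE a2).
Qed.

Lemma Bstep (d : Order.disp_t) (T : orderType d) e (p : nat -> T) n :
  good e p n -> forall b m, (m.+2 <= b)%N -> (b < n)%N ->
  inside (p b) (p b.+1) (p m.+1) -> inside (p b) (p b.+1) (p m).
Proof.
move=> G b m km mn Hin; have [Hs HX He Hd Ha] := G.
apply/negPn/negP => Hout.
have e1 : e (p b) (p b.+1) by apply: He; lia.
have e2 : e (p m.+1) (p m) by rewrite Hs; apply: He; lia.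
have n1 : p m != p b by apply: (good_ne G); lia.
have n2 : p m != p b.+1 by apply: (good_ne G); lia.
have a1 : ~~ e (p m) (p b) by apply: (good_na G); lia.
have a2 : ~~ e (p m) (p b.+1) by apply: (good_na G); lia.
have := crossX Hs HX e1 e2 Hin Hout n1 n2.
by rewrite (negbTE a1) (negbTE a2).
Qed.

Lemma NoCross (d : Order.disp_t) (T : orderType d) e (p : nat -> T) n :
  good e p n -> forall k m, (k.+3 <= m)%N -> (m < n)%N ->
  inside (p k) (p k.+1) (p m) = inside (p k) (p k.+1) (p m.+1).
Proof.
move=> G k m km mn; have [Hs HX He Hd Ha] := G.
apply/idP/idP => Hin; first by apply: (Fstep G) => //; lia.
apply/negPn/negP => Hout.
have e1 : e (p k) (p k.+1) by apply: He; lia.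
have e2 : e (p m.+1) (p m) by rewrite Hs; apply: He; lia.
have n1 : p m != p k by apply: (good_ne G); lia.
have n2 : p m != p k.+1 by apply: (good_ne G); lia.
have a1 : ~~ e (p m) (p k) by apply: (good_na G); lia.
have a2 : ~~ e (p m) (p k.+1) by apply: (good_na G); lia.
have := crossX Hs HX e1 e2 Hin Hout n1 n2.
by rewrite (negbTE a1) (negbTE a2).
Qed.

Lemma Fit (d : Order.disp_t) (T : orderType d) e (p : nat -> T) n :
  good e p n -> forall k c m, (k.+2 <= c)%N -> (c <= m)%N -> (m <= n)%N ->
  inside (p k) (p k.+1) (p c) -> inside (p k) (p k.+1) (p m).
Proof.
move=> G k c; elim=> [|m IH] kc cm mn Hc; first lia.
case: (ltnP c m.+1) => h; last by have -> : m.+1 = c by lia.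
apply: (Fstep G); [lia|lia|apply: IH => //; lia].
Qed.

Lemma Bit (d : Order.disp_t) (T : orderType d) e (p : nat -> T) n :
  good e p n -> forall b c m, (b < n)%N -> (c.+1 <= b)%N -> (m <= c)%N ->
  inside (p b) (p b.+1) (p c) -> inside (p b) (p b.+1) (p m).
Proof.
move=> G b; elim=> [|c IH] m bn cb mc Hc; first by have -> : m = 0%N by lia.
case: (ltnP m c.+1) => h; last by have -> : m = c.+1 by lia.
apply: IH => //; try lia. apply: (Bstep G) => //; lia.
Qed.

Lemma ConstB (d : Order.disp_t) (T : orderType d) e (p : nat -> T) n :
  good e p n -> forall k g m, (k.+3 <= g)%N -> (g <= m)%N -> (m <= n)%N ->
  inside (p k) (p k.+1) (p g) = inside (p k) (p k.+1) (p m).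
Proof.
move=> G k g; elim=> [|m IH] kg gm mn; first lia.
case: (ltnP g m.+1) => h; last by have -> : m.+1 = g by lia.
rewrite IH; try lia. apply: (NoCross G); lia.
Qed.

Lemma SL (d : Order.disp_t) (T : orderType d) e (p : nat -> T) n :
  good e p n -> forall a dd g m, (a + dd + 2 <= g)%N -> (g <= m)%N -> (m <= n)%N ->
  bt (p a) (p (a + dd)) (p g) = bt (p a) (p (a + dd)) (p m).
Proof.
move=> G a; elim=> [|dd IH] g m h1 h2 h3.
  by rewrite addn0 /bt !eqxx.
rewrite addnS (bt_trans _ (p (a + dd))) [in RHS](bt_trans _ (p (a + dd))).
rewrite (IH g m); try lia.
rewrite !bt_inside ?(good_ne G) //; try lia.
by rewrite (ConstB G (g := g) (m := m)) //; lia.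
Qed.

Ltac cl := repeat match goal with
 | H : is_true (@Order.lt _ _ _ _) |- _ => clear H
 | H : is_true (@Order.le _ _ _ _) |- _ => clear H
 | H : is_true (inside _ _ _) |- _ => clear H
 | H : is_true (~~ _) |- _ => clear H
 | H : forall _, _ |- _ => clear H
 | H : good _ _ _ |- _ => clear H
 end.
Ltac ll := cl; lia.

Lemma good_eqF (d : Order.disp_t) (T : orderType d) e (p : nat -> T) n :
  good e p n -> forall i j, p i = p j -> (i <= n)%N -> (j <= n)%N -> i != j -> False.
Proof.
move=> G i j E hi hj ij; have := good_ne G hi hj ij.
by rewrite E eqxx.
Qed.

Lemma lt_of_nlt (d : Order.disp_t) (T : orderType d) e (p : nat -> T) n :
  good e p n -> forall i j, (i <= n)%N -> (j <= n)%N -> i != j ->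
  ~~ (p i < p j) -> p j < p i.
Proof.
move=> G i j hi hj ij h; rewrite lt_neqAle leNgt h andbT.
by apply: (good_ne G) => //; rewrite eq_sym.
Qed.

Lemma hard (d : Order.disp_t) (T : orderType d) e (p : nat -> T) n :
  good e p n -> forall l r, (l < r)%N -> (r <= n)%N ->
  (forall k, (k <= n)%N -> p l <= p k) -> (forall k, (k <= n)%N -> p k <= p r) ->
  p 0 < p n ->
  forall i j, (i < l)%N -> (r < j)%N -> (j <= n)%N -> p j < p i -> False.
Proof.
move=> G l r lr rn Hmin Hmax Hst i j il rj jn ji.
have [i0 hi0 Mi0] := exmax p (ltac:(ll) : (0 <= l.-1)%N).
have [j0 hj0 Mj0] := exmin p (ltac:(ll) : (r.+1 <= n)%N).
have pii0 : p i <= p i0 by apply: Mi0; ll.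
have pjj0 : p j0 <= p j by apply: Mj0; ll.
have j0i0 : p j0 < p i0 by apply: le_lt_trans pjj0 _; apply: lt_le_trans ji _.
have nl : ~~ (p j0 < p l) by rewrite -leNgt; apply: Hmin; ll.
have [a ha /andP[Pa Pa1]] := exstep (P := fun k => p j0 < p k)
   (ltac:(ll) : (i0 <= l)%N) j0i0 nl.
have a1j0 : p a.+1 < p j0 by apply: (lt_of_nlt G) => //; ll.
have Pr : p i0 < p r.
  have h1 : p i0 <= p r by apply: Hmax; ll.
  have h2 : p i0 != p r by apply: (good_ne G); ll.
  by rewrite lt_neqAle h1 h2.
have nj : ~~ (p i0 < p j0) by rewrite -leNgt ltW.
have [b hb /andP[Pb Pb1]] := exstep (P := fun k => p i0 < p k)
   (ltac:(ll) : (r <= j0)%N) Pr nj.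
have b1i0 : p b.+1 < p i0 by apply: (lt_of_nlt G) => //; ll.
have pa : p a <= p i0 by apply: Mi0; ll.
have pb1 : p j0 <= p b.+1 by apply: Mj0; ll.
have Ia : inside (p a) (p a.+1) (p n).
  apply: (Fit G (c := j0)); try ll. by rewrite /inside a1j0 Pa orbT.
have Ib : inside (p b) (p b.+1) (p 0).
  apply: (Bit G (c := i0)); try ll. by rewrite /inside b1i0 Pb orbT.
have /andP[ta1 ta] := inside_gt (lt_trans a1j0 Pa) Ia.
have /andP[sb1 sb] := inside_gt (lt_trans b1i0 Pb) Ib.
case: (ltgtP (p a) (p b.+1)) => [h|h|h].
- have := lt_trans ta (lt_trans h sb1). by rewrite (lt_gtF Hst).
- have E : bt (p 0) (p (0 + a)) (p b.+1) = bt (p 0) (p (0 + a)) (p n).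
    by apply: (SL G); ll.
  move: E; rewrite add0n /bt.
  by rewrite (lt_gtF sb1) (lt_gtF h) Hst (lt_gtF ta).
- by move: h; apply/eqP; apply: (good_ne G); ll.
Qed.

Lemma main_abs (d : Order.disp_t) (T : orderType d) e (p : nat -> T) n :
  good e p n -> forall l r, (l < r)%N -> (r <= n)%N ->
  (forall k, (k <= n)%N -> p l <= p k) -> (forall k, (k <= n)%N -> p k <= p r) ->
  p 0 < p n ->
  (forall i j, (i < l)%N -> (l < j)%N -> (j <= n)%N -> p i < p j) /\
  (forall i j, (i < r)%N -> (r < j)%N -> (j <= n)%N -> p i < p j).
Proof.
move=> G l r lr rn Hmin Hmax Hst.
have Hhard := hard G lr rn Hmin Hmax Hst.
split=> i j il lj jn; (case: (ltgtP (p i) (p j)) => [//|ji|ij];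
  last by exfalso; apply: (good_eqF G ij); ll); exfalso.
- case: (ltngtP j r) => jr.
  + have nl : ~~ (p j < p l) by rewrite -leNgt; apply: Hmin; ll.
    have [a ha /andP[Pa Pa1]] := exstep (P := fun k => p j < p k)
       (ltac:(ll) : (i <= l)%N) ji nl.
    have a1j : p a.+1 < p j by apply: (lt_of_nlt G) => //; ll.
    have Ir : inside (p a) (p a.+1) (p r).
      apply: (Fit G (c := j)); try ll. by rewrite /inside a1j Pa orbT.
    have /andP[_ ra] := inside_gt (lt_trans a1j Pa) Ir.
    have := Hmax a ltac:(ll). by rewrite leNgt ra.
  + exact: (Hhard i j).
  + subst j. have := Hmax i ltac:(ll). by rewrite leNgt ji.
- case: (ltngtP i l) => li.
  + exact: (Hhard i j li lj jn ji).
  + have Pr : p i < p r.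
      have h1 : p i <= p r by apply: Hmax; ll.
      have h2 : p i != p r by apply: (good_ne G); ll.
      by rewrite lt_neqAle h1 h2.
    have nj : ~~ (p i < p j) by rewrite -leNgt ltW.
    have [b hb /andP[Pb Pb1]] := exstep (P := fun k => p i < p k)
       (ltac:(ll) : (r <= j)%N) Pr nj.
    have b1i : p b.+1 < p i by apply: (lt_of_nlt G) => //; ll.
    have Il : inside (p b) (p b.+1) (p l).
      apply: (Bit G (c := i)); try ll. by rewrite /inside b1i Pb orbT.
    have /andP[bl _] := inside_gt (lt_trans b1i Pb) Il.
    have := Hmin b.+1 ltac:(ll). by rewrite leNgt bl.
  + subst i. have := Hmin j ltac:(ll). by rewrite leNgt ji.
Qed.

Lemma last_take' (T : Type) (s : T) q i : (i <= size q)%N ->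
  last s (take i q) = nth s (s :: q) i.
Proof.
move=> h; rewrite (last_nth s) size_takel //.
by case: i h => [|i] h //=; rewrite nth_take.
Qed.

Lemma path_drop' (T : Type) (e : rel T) s q m : path e s q -> (m <= size q)%N ->
  path e (nth s (s :: q) m) (drop m q).
Proof.
move=> P h; move: P; rewrite -{1}(cat_take_drop m q) cat_path => /andP[_].
by rewrite last_take'.
Qed.

Lemma shortcut (T : eqType) (e : rel T) s t q : shortest_st e s t q ->
  forall i k, (i <= k)%N -> (k <= size q)%N ->
  ((k < size q)%N -> e (nth s (s :: q) i) (nth s (s :: q) k.+1)) ->
  (k = size q -> nth s (s :: q) i = t) -> (k <= i)%N.
Proof.
case=> [[Hp Hl] Hmin] i k ik kn He Ht.
pose q' := take i q ++ drop k q.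
have Hs : size q' = (i + (size q - k))%N.
  by rewrite /q' size_cat size_takel ?size_drop //; lia.
suff W : walk_st e s t q' by have := Hmin _ W; rewrite Hs; lia.
have Hpt : path e s (take i q).
  by move: Hp; rewrite -{1}(cat_take_drop i q) cat_path => /andP[].
rewrite /walk_st /q' cat_path last_cat Hpt last_take' /=; last lia.
case: (ltnP k (size q)) => kq.
- rewrite (drop_nth s kq) /= He //; split.
    exact: (path_drop' (m := k.+1) Hp kq).
  by rewrite -Hl -[in RHS](cat_take_drop k.+1 q) last_cat last_take'.
- have E : k = size q by lia.
  by subst k; rewrite drop_size /= Ht.
Qed.

Theorem lemma8 (d : Order.disp_t) (T : finOrderType d) (e : rel T)
  (Hg : simple_graph e) (HX : X_property e)
  (s t : T) (Hst : s < t) (q : seq T) (HP : shortest_st e s t q)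
  (l r : nat) (Hl : is_lefti s (s :: q) l) (Hr : is_righti s (s :: q) r)
  (Hlr : (l < r)%N) :
  (forall i j : nat, (i < l)%N -> (l < j)%N -> (j < size (s :: q))%N ->
     nth s (s :: q) i < nth s (s :: q) j) /\
  (forall i j : nat, (i < r)%N -> (r < j)%N -> (j < size (s :: q))%N ->
     nth s (s :: q) i < nth s (s :: q) j).
Proof.
pose p k := nth s (s :: q) k.
have [[Hp Hlast] _] := HP.
have He : forall k, (k < size q)%N -> e (p k) (p k.+1).
  by move/(pathP s): Hp.
have pn : p (size q) = t by rewrite /p -(last_nth s) Hlast.
have G : good e p (size q).
  split.
  - exact: Hg.1.
  - exact: HX.
  - exact: He.
  - move=> i j /andP[ij jn]; apply/eqP => E.
    have := shortcut HP (i := i) (k := j) (ltnW ij) jn.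
    have H1 : (j < size q)%N -> e (nth s (s :: q) i) (nth s (s :: q) j.+1).
      by move=> h; move: (He j h); rewrite -E.
    have H2 : j = size q -> nth s (s :: q) i = t.
      by move=> h; move: pn; rewrite -h -E.
    move=> /(_ H1 H2). lia.
  - move=> i j /andP[ij jn]; apply/negP => Ee.
    have j0 : j = j.-1.+1 by rewrite prednK //; case: j ij {jn Ee}.
    have h1 : (i <= j.-1)%N by move: ij; rewrite {1}j0; lia.
    have h2 : (j.-1 < size q)%N by move: jn; rewrite {1}j0; lia.
    have := shortcut HP (i := i) (k := j.-1) h1 (ltnW h2).
    have H1 : (j.-1 < size q)%N -> e (nth s (s :: q) i) (nth s (s :: q) j.-1.+1).
      by move=> _; rewrite -j0.
    have H2 : j.-1 = size q -> nth s (s :: q) i = t by move=> h; rewrite h ltnn in h2.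
    move=> /(_ H1 H2). lia.
have [Hl1 Hl2] := Hl; have [Hr1 Hr2] := Hr.
have := @main_abs _ T e p (size q) G l r Hlr ltac:(rewrite /= ltnS in Hr1; exact: Hr1)
  (fun k hk => Hl2 k ltac:(rewrite /= ltnS; exact: hk))
  (fun k hk => Hr2 k ltac:(rewrite /= ltnS; exact: hk))
  ltac:(by rewrite pn).
case=> [C1 C2]; split=> i j h1 h2 h3.
- by apply: C1 => //; rewrite /= ltnS in h3.
- by apply: C2 => //; rewrite /= ltnS in h3.
Qed.
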